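(* (a) If $S$ is an $\varepsilon$-synchronization string, then every consecutive substring of $S$ satisfies the $\varepsilon$-self-matching property. (b) If every consecutive substring of a string $S$ satisfies the $\frac{\varepsilon}{2}$-self-matching property, then $S$ is an $\varepsilon$-synchronization string.
   Context: $\mathrm{ED}$ is insertion/deletion edit distance; $S[i,j)$ is the substring at positions $i..j-1$. $S\in\Sigma^n$ is an $\varepsilon$-synchronization string if $\mathrm{ED}(S[i,j),S[j,k))>(1-\varepsilon)(k-i)$ for all $1\le i<j<k\le n+1$. A monotone matching between $S$ and $S'$ is a set of pairs $\{(a_1,b_1),\dots,(a_m,b_m)\}$ with $a_1<\dots<a_m$, $b_1<\dots<b_m$, $S[a_i]=S'[b_i]$. In a monotone matching from $S$ to itself a pair is good if $a_i=b_i$ and bad otherwise. A string $S$ satisfies the $\varepsilon$-self-matching property if every monotone matching between $S$ and itself contains fewer than $\varepsilon|S|$ bad pairs. *)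

(* Defs.v *)
From mathcomp Require Import all_boot all_order all_algebra.
Set Implicit Arguments. Unset Strict Implicit. Unset Printing Implicit Defensive.
Import Order.TTheory GRing.Theory Num.Theory.

Section Defs.
Variable T : eqType.

(* Insertion/deletion edit distance: the standard recursion computing the
   minimum number of insertions and deletions transforming s into t
   (delete head of s, insert head of t, or keep matching heads). *)
Fixpoint ed (s t : seq T) {struct s} : nat :=
  match s with
  | [::] => size t
  | x :: s' =>
      let fix ed_aux (t : seq T) : nat :=
        match t with
        | [::] => size s
        | y :: t' =>
            minn (ed s' t).+1
              (minn (ed_aux t').+1 (if x == y then ed s' t' else (ed s' t').+2))
        end in
      ed_aux t
  end.

(* S[i,j) with 0-indexed positions: the symbols at positions i..j-1. *)
Definition substr (S : seq T) (i j : nat) : seq T := take (j - i) (drop i S).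

(* epsilon-synchronization string (0-indexed version of 1 <= i<j<k <= n+1). *)
Definition sync_string (R : realFieldType) (eps : R) (S : seq T) : Prop :=
  forall i j k : nat, (i < j)%N -> (j < k)%N -> (k <= size S)%N ->
    ((1 - eps) * (k - i)%:R < (ed (substr S i j) (substr S j k))%:R)%R.

Definition monotone_matching (S S' : seq T) (M : seq (nat * nat)) : Prop :=
  sorted ltn (map fst M) /\ sorted ltn (map snd M) /\
  (forall p, p \in M ->
     [/\ (p.1 < size S)%N, (p.2 < size S')%N &
         onth S p.1 = onth S' p.2]).

Definition bad_pairs (M : seq (nat * nat)) : nat := count (fun p => p.1 != p.2) M.

Definition self_matching (R : realFieldType) (eps : R) (S : seq T) : Prop :=
  forall M, monotone_matching S S M -> ((bad_pairs M)%:R < eps * (size S)%:R)%R.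

End Defs.

(* Main.v *)
Require Import Defs.
From mathcomp Require Import all_boot all_order all_algebra.
Import Order.TTheory GRing.Theory Num.Theory.
From mathcomp Require Import zify lra.
Set Implicit Arguments. Unset Strict Implicit. Unset Printing Implicit Defensive.

Section Ed.
Variable T : eqType.
Implicit Types s t : seq T.

Lemma ed_nil_l t : ed [::] t = size t. Proof. by []. Qed.
Lemma ed_nil_r s : ed s [::] = size s. Proof. by case: s. Qed.
Lemma ed_cons x s y t : ed (x :: s) (y :: t) =
  minn (ed s (y :: t)).+1 (minn (ed (x :: s) t).+1
     (if x == y then ed s t else (ed s t).+2)).
Proof. by []. Qed.

Lemma lt_before (A : eqType) (f : A -> nat) l1 y l2 x :
  sorted ltn (map f (l1 ++ y :: l2)) -> x \in l1 -> f x < f y.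
Proof.
move=> so xin.
have : sorted ltn [:: f x; f y].
  apply: (subseq_sorted ltn_trans _ so).
  rewrite map_cat /=. rewrite -[[:: f x; f y]]/([:: f x] ++ [:: f y]).
  apply: cat_subseq; first by rewrite sub1seq; apply: map_f.
  by rewrite /= eqxx sub0seq.
by rewrite /= andbT.
Qed.

Lemma lt_after (A : eqType) (f : A -> nat) l1 y l2 x :
  sorted ltn (map f (l1 ++ y :: l2)) -> x \in l2 -> f y < f x.
Proof.
move=> so xin.
have : sorted ltn [:: f y; f x].
  apply: (subseq_sorted ltn_trans _ so).
  rewrite map_cat /=. rewrite -[[:: f y; f x]]/([::] ++ [:: f y; f x]).
  apply: cat_subseq; first by apply: sub0seq.
  by rewrite /= eqxx sub1seq; apply: map_f.
by rewrite /= andbT.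
Qed.

Lemma mm_map (x y x' y' : seq T) N (f g : nat -> nat) :
  monotone_matching x y N ->
  {in map fst N &, {homo f : a b / a < b}} ->
  {in map snd N &, {homo g : a b / a < b}} ->
  (forall e, e \in N -> [/\ f e.1 < size x', g e.2 < size y' &
        onth x' (f e.1) = onth y' (g e.2)]) ->
  monotone_matching x' y' (map (fun e => (f e.1, g e.2)) N).
Proof.
move=> [l1 [l2 _]] hf hg he; split; [|split].
- rewrite -map_comp /=.
  have -> : [seq f (fst e) | e <- N] = map f (map fst N) by rewrite -map_comp.
  by apply: (homo_sorted_in hf) => //; apply/allP.
- have -> : [seq snd e | e <- [seq (f e.1, g e.2) | e <- N]] = map g (map snd N) by rewrite -!map_comp.
  by apply: (homo_sorted_in hg) => //; apply/allP.
- by move=> p /mapP [e eN ->] /=; apply: he.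
Qed.


Lemma mm_gt (x y : seq T) e N e' : monotone_matching x y (e :: N) -> e' \in N ->
  e.1 < e'.1 /\ e.2 < e'.2.
Proof.
move=> [s1 [s2 _]] h; split.
- by apply: (@lt_after _ fst [::] e N) => //.
- by apply: (@lt_after _ snd [::] e N) => //.
Qed.

Lemma mm_in (x y : seq T) N e : monotone_matching x y N -> e \in N ->
  [/\ e.1 < size x, e.2 < size y & onth x e.1 = onth y e.2].
Proof. by move=> [_ [_ h]] /h. Qed.

Lemma mm_behead (x y : seq T) e N : monotone_matching x y (e :: N) ->
  monotone_matching x y N.
Proof.
case=> [/= /path_sorted s1 [/= /path_sorted s2 h]]; split; [|split] => // p pN.
by apply: h; rewrite inE pN orbT.
Qed.

Lemma onth_cons (x : T) s a : 0 < a -> onth (x :: s) a = onth s a.-1.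
Proof. by case: a. Qed.

Lemma ed_mm_le s t N : monotone_matching s t N -> ed s t + (size N).*2 <= size s + size t.
Proof.
elim: s t N => [|x s IHs] t N.
  case: N => [|e N] mm; first by rewrite ed_nil_l addn0.
  by have [] := mm_in mm (mem_head _ _).
elim: t N => [|y t IHt] N mm.
  case: N mm => [|e N] mm; first by rewrite ed_nil_r addn0 ?addn0.
  by have [] := mm_in mm (mem_head _ _).
have mm0 : forall (u v : seq T), monotone_matching u v [::] by [].
case: N mm => [|[a b] N] mm.
  rewrite ed_cons addn0.
  apply: leq_trans (geq_minl _ _) _.
  have := IHs (y :: t) [::] (mm0 _ _); rewrite /= addn0 => h.
  by rewrite addSn ltnS.
have [a_lt b_lt eqab] := mm_in mm (mem_head _ _).
rewrite /= in a_lt b_lt eqab.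
have gt := fun e' (h : e' \in N) => mm_gt mm h.
case: a mm eqab a_lt gt => [|a] mm eqab a_lt gt.
  case: b mm eqab b_lt gt => [|b] mm eqab b_lt gt.
  -
    case: eqab => exy.
    set N0 := map (fun e => (e.1.-1, e.2.-1)) N.
    have mmN0 : monotone_matching s t N0.
      apply: mm_map; first exact: mm_behead mm.
      + move=> u v /mapP [e1 e1N ->] /mapP [e2 e2N ->] lt12.
        have [h1 _] := gt _ e1N; have [h2 _] := gt _ e2N.
        by case: (e1.1) h1 lt12 => // ? _; case: (e2.1) h2 => // ? _.
      + move=> u v /mapP [e1 e1N ->] /mapP [e2 e2N ->] lt12.
        have [_ h1] := gt _ e1N; have [_ h2] := gt _ e2N.
        by case: (e2.2) h2 lt12 => // ? _; case: (e1.2) h1 => // ? _.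
      move=> e eN.
      have [h1 h2] := gt _ eN.
      have [] := mm_in (mm_behead mm) eN.
      by case: (e.1) h1 => // a1 _; case: (e.2) h2 => // b1 _ /=.
    have := IHs t N0 mmN0.
    rewrite size_map ed_cons exy eqxx /= => h.
    move: h; rewrite /=; lia.
  -
    set N0 := map (fun e => (e.1, e.2.-1)) ((0, b.+1) :: N).
    have mmN0 : monotone_matching (x :: s) t N0.
      apply: (@mm_map (x :: s) (y :: t) _ _ _ id predn); first exact: mm.
      + by move=> u v.
      + move=> u v /mapP [e1 e1N ->] /mapP [e2 e2N ->] lt12.
        have h1 : 0 < e1.2 by move: e1N; rewrite inE => /orP [/eqP -> //|/gt [_]]; apply: leq_ltn_trans.
        have h2 : 0 < e2.2 by move: e2N; rewrite inE => /orP [/eqP -> //|/gt [_]]; apply: leq_ltn_trans.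
        by case: (e2.2) h2 lt12 => // ? _; case: (e1.2) h1 => // ? _.
      move=> e eN.
      have h2 : 0 < e.2 by move: eN; rewrite inE => /orP [/eqP -> //|/gt [_]]; apply: leq_ltn_trans.
      have [] := mm_in mm eN.
      by case: (e.2) h2 => // b1 _ /=.
    have := IHt N0 mmN0.
    rewrite size_map ed_cons => h.

    move: h; rewrite /= !addnS !addSn; lia.
set N0 := map (fun e => (e.1.-1, e.2)) ((a.+1, b) :: N).
have mmN0 : monotone_matching s (y :: t) N0.
  apply: (@mm_map (x :: s) (y :: t) _ _ _ predn id); first exact: mm.
  + move=> u v /mapP [e1 e1N ->] /mapP [e2 e2N ->] lt12.
    have h1 : 0 < e1.1 by move: e1N; rewrite inE => /orP [/eqP -> //|/gt [] /= ? ?]; lia.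
    have h2 : 0 < e2.1 by move: e2N; rewrite inE => /orP [/eqP -> //|/gt [] /= ? ?]; lia.
    by case: (e2.1) h2 lt12 => // ? _; case: (e1.1) h1 => // ? _.
  + by move=> u v.
  move=> e eN.
  have h1 : 0 < e.1 by move: eN; rewrite inE => /orP [/eqP -> //|/gt [] /= ? ?]; lia.
  have [] := mm_in mm eN.
  by case: (e.1) h1 => // a1 _ /=.
have := IHs (y :: t) N0 mmN0.
rewrite size_map ed_cons => h.

move: h; rewrite /= !addnS !addSn; lia.
Qed.

Lemma homo_succ (l : seq nat) : {in l &, {homo succn : a b / a < b}}.
Proof. by move=> a b _ _. Qed.
Lemma homo_id (l : seq nat) : {in l &, {homo id : a b / a < b}}.
Proof. by move=> a b _ _. Qed.

Lemma sorted0succ (l : seq nat) : sorted ltn (map succn l) -> sorted ltn (0 :: map succn l).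
Proof. by case: l. Qed.

Lemma mm_cons00 (x : T) s t N : monotone_matching s t N ->
  monotone_matching (x :: s) (x :: t) ((0, 0) :: map (fun e => (e.1.+1, e.2.+1)) N).
Proof.
move=> mm.
have mm' : monotone_matching (x :: s) (x :: t) (map (fun e => (succn e.1, succn e.2)) N).
  apply: (@mm_map s t _ _ _ succn succn); [exact: mm|exact: homo_succ|exact: homo_succ|].
  by move=> e /(mm_in mm) [].
case: mm' => [s1 [s2 h]]; split; [|split].
- by rewrite /=; move: s1; rewrite -map_comp; case: N {mm h s2}.
- by rewrite /=; move: s2; rewrite -map_comp; case: N {mm h s1}.
- move=> p; rewrite inE => /orP [/eqP -> //|]; exact: h.
Qed.

Lemma ed_mm_ex s t : exists N, monotone_matching s t N /\
  size s + size t <= ed s t + (size N).*2.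
Proof.
elim: s t => [|x s IHs] t.
  by exists [::]; split => //; rewrite ed_nil_l addn0.
elim: t => [|y t IHt].
  by exists [::]; split => //; rewrite ed_nil_r ?addn0.
have [N1 [mm1 h1]] := IHs (y :: t).
have [N2 [mm2 h2]] := IHt.
have [N3 [mm3 h3]] := IHs t.
have c1 : exists N, monotone_matching (x :: s) (y :: t) N /\
    size (x :: s) + size (y :: t) <= (ed s (y :: t)).+1 + (size N).*2.
  exists (map (fun e => (succn e.1, id e.2)) N1); split.
    apply: (@mm_map s (y :: t) _ _ _ succn id); [exact: mm1|exact: homo_succ|exact: homo_id|].
    by move=> e /(mm_in mm1) [].
  by move: h1; rewrite size_map /=; lia.
have c2 : exists N, monotone_matching (x :: s) (y :: t) N /\
    size (x :: s) + size (y :: t) <= (ed (x :: s) t).+1 + (size N).*2.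
  exists (map (fun e => (id e.1, succn e.2)) N2); split.
    apply: (@mm_map (x :: s) t _ _ _ id succn); [exact: mm2|exact: homo_id|exact: homo_succ|].
    by move=> e /(mm_in mm2) [].
  by move: h2; rewrite size_map /=; lia.
have c3 : exists N, monotone_matching (x :: s) (y :: t) N /\
    size (x :: s) + size (y :: t) <= (if x == y then ed s t else (ed s t).+2) + (size N).*2.
  case: eqP => [<-|_].
    exists ((0, 0) :: map (fun e => (e.1.+1, e.2.+1)) N3); split; first exact: mm_cons00.
    by move: h3; rewrite /= size_map; lia.
  exists (map (fun e => (succn e.1, succn e.2)) N3); split.
    apply: (@mm_map s t _ _ _ succn succn); [exact: mm3|exact: homo_succ|exact: homo_succ|].
    by move=> e /(mm_in mm3) [].
  by move: h3; rewrite /= size_map; lia.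
rewrite ed_cons.
set A := (ed s (y :: t)).+1 in c1 *.
set B := (ed (x :: s) t).+1 in c2 *.
set C := (if x == y then _ else _) in c3 *.
have : minn A (minn B C) = A \/ minn A (minn B C) = B \/ minn A (minn B C) = C by lia.
by case=> [->|[->|->]].
Qed.

End Ed.

Section Comb.
Variable R : realFieldType.
Variable T : eqType.
Variable eps : R.
Hypothesis eps_gt0 : (0 < eps)%R.

Lemma add_bound (u v A B C : nat) : (u%:R < eps * A%:R)%R ->
  ((v%:R < eps * B%:R)%R \/ v = 0) -> A + B <= C -> ((u + v)%:R < eps * C%:R)%R.
Proof.
move=> hu hv hABC.
have hC : (eps * (A + B)%:R <= eps * C%:R)%R by rewrite ler_pM2l // ler_nat.
case: hv => [hv|->].
  apply: lt_le_trans hC; rewrite !natrD mulrDr; exact: ltrD.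
rewrite addn0; apply: (lt_le_trans hu); apply: le_trans hC.
by rewrite ler_pM2l // ler_nat leq_addr.
Qed.

Lemma mono_bound (v B B' : nat) : ((v%:R < eps * B%:R)%R \/ v = 0) -> B <= B' ->
  ((v%:R < eps * B'%:R)%R \/ v = 0).
Proof.
case=> [h|->] hB; last by right.
left; apply: lt_le_trans h _; by rewrite ler_pM2l // ler_nat.
Qed.

Lemma mm_swap (x y : seq T) N : monotone_matching x y N ->
  monotone_matching y x (map (fun e => (e.2, e.1)) N).
Proof.
case=> [s1 [s2 h]]; split; [|split].
- by rewrite -map_comp.
- by rewrite -map_comp.
- move=> p /mapP [e eN ->] /=; have [? ? ?] := h e eN; by split.
Qed.

Lemma bad_swap N : bad_pairs (map (fun e => (e.2, e.1)) N) = bad_pairs N.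
Proof. by rewrite /bad_pairs count_map; apply: eq_count => e /=; rewrite eq_sym. Qed.

Variable X : seq T.
Let n := size X.

Definition Hf := forall N p q r, monotone_matching X X N -> N != [::] ->
  all (fun e : nat * nat => (p <= e.1 < q) && (q <= e.2 < r)) N -> r <= n ->
  (((size N).*2)%:R < eps * (r - p)%:R)%R.

Definition Claim (M : seq (nat * nat)) := forall a b M', M = (a, b) :: M' ->
  ((((bad_pairs M).*2)%:R < eps * (n.*2 - a - b)%:R)%R \/ (bad_pairs M).*2 = 0).

Lemma claim_swap M : Claim (map (fun e => (e.2, e.1)) M) -> Claim M.
Proof.
move=> h a b M' eM.
have E : map (fun e => (e.2, e.1)) M = (b, a) :: map (fun e => (e.2, e.1)) M' by rewrite eM.
have := h _ _ _ E; rewrite bad_swap.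
by have -> : n.*2 - b - a = n.*2 - a - b by lia.
Qed.

Lemma mm_take (M : seq (nat * nat)) j : monotone_matching X X M -> monotone_matching X X (take j M).
Proof.
case=> [s1 [s2 h]]; split; [|split].
- by rewrite map_take; apply: take_sorted.
- by rewrite map_take; apply: take_sorted.
- by move=> e /mem_take; apply: h.
Qed.

Lemma mm_drop (M : seq (nat * nat)) j : monotone_matching X X M -> monotone_matching X X (drop j M).
Proof.
case=> [s1 [s2 h]]; split; [|split].
- by rewrite map_drop; apply: drop_sorted.
- by rewrite map_drop; apply: drop_sorted.
- by move=> e /mem_drop; apply: h.
Qed.

Lemma comb_main : Hf -> forall M, monotone_matching X X M -> Claim M.
Proof.
move=> hf M; have [k] := ubnP (size M); elim: k M => // k IH M ltM mm.
have fwd : forall M0 a b M0', size M0 < k.+1 -> monotone_matching X X M0 ->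
    M0 = (a, b) :: M0' -> a < b ->
    ((((bad_pairs M0).*2)%:R < eps * (n.*2 - a - b)%:R)%R \/ (bad_pairs M0).*2 = 0).
  move=> M0 a b M0' ltM0 mm0 eM0 hab.
  have ab_in : (a, b) \in M0 by rewrite eM0 mem_head.
  have [a_lt b_lt _] := mm_in mm0 ab_in.
  rewrite /= in a_lt b_lt.
  pose P := fun e : nat * nat => b <= e.1.
  pose j := find P M0.
  have j_pos : 0 < j.
    have hba : (b <= a) = false by rewrite leqNgt hab.
    by rewrite /j eM0 /= /P /= hba.
  pose G := take j M0.
  have Gin : forall e, e \in G -> [/\ e.1 < b, a <= e.1 & b <= e.2].
    move=> e eG.
    have iG : index e G < size G by rewrite index_mem.
    have sG : size G <= j by rewrite /G size_take; case: ifP => // /negbT; rewrite -leqNgt.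
    have ij : index e G < j := leq_trans iG sG.
    have := nth_index (0, 0) eG; rewrite /G nth_take // => ee.
    have := before_find (0, 0) ij; rewrite -/j ee /P => /negbT; rewrite -ltnNge => h1.
    have : e \in M0 by apply: mem_take eG.
    rewrite eM0 inE => /orP [/eqP -> /=|eM']; first by split.
    have mmc : monotone_matching X X ((a, b) :: M0') by rewrite -eM0.
    have [h2 h3] := mm_gt mmc eM'; rewrite /= in h2 h3.
    split => //; exact: ltnW.
  have mmG : monotone_matching X X G by apply: mm_take.
  have badG : bad_pairs G = size G.
    apply/eqP; rewrite -all_count; apply/allP => e /Gin [h1 h2 h3] /=.
    by rewrite neq_ltn (leq_trans h1 h3).
  have GnE : G != [::].
    rewrite -size_eq0 /G size_take eM0 /=; case: ifP => _; first by rewrite -lt0n.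
    by [].
  have bad_split : bad_pairs M0 = size G + bad_pairs (drop j M0).
    by rewrite -[in bad_pairs M0](cat_take_drop j M0) /bad_pairs count_cat -/(bad_pairs G) badG.
  rewrite bad_split doubleD.
  case eR : (drop j M0) => [|[a2 b2] R'].
    rewrite [bad_pairs [::]]/= double0.
    left; apply: (@add_bound _ 0 (n - a) 0) (or_intror erefl) _; last by rewrite /n; lia.
    apply: (hf G a b n) => //; apply/allP => e eG.
    have [h1 h2 h3] := Gin e eG.
    have [_ h4 _] := mm_in mmG eG.
    by rewrite /= h1 h2 h3 h4.
  have jlt : j < size M0.
    by rewrite ltnNge; apply/negP => hle; move: eR; rewrite drop_oversize.
  have Pj : P (a2, b2).
    have hP : has P M0 by rewrite has_find.
    have := nth_find (0, 0) hP; rewrite -/j.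
    by rewrite -[j]addn0 -nth_drop eR.
  rewrite /P /= in Pj.
  have eM : M0 = G ++ (a2, b2) :: R' by rewrite -eR cat_take_drop.
  have G_b2 : forall e, e \in G -> e.2 < b2.
    move=> e eG; case: mm0 => [_ [s2 _]].
    by rewrite eM in s2; apply: (lt_before s2).
  have ab2_in : (a2, b2) \in M0 by rewrite eM mem_cat mem_head orbT.
  have [_ b2_lt _] := mm_in mm0 ab2_in.
  rewrite /= in b2_lt.
  have abG : (a, b) \in G.
    rewrite /G eM0 -(prednK j_pos) /=; exact: mem_head.
  have hb : b <= b2 by apply: ltnW; apply: (G_b2 _ abG).
  have hG : (((size G).*2)%:R < eps * (b2 - a)%:R)%R.
    apply: (hf G a b b2) => //; last by apply: ltnW.
    apply/allP => e eG.
    have [h1 h2 h3] := Gin e eG.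
    by rewrite /= h1 h2 h3 (G_b2 e eG).
  have szR : size (drop j M0) < k by rewrite size_drop; move: ltM0; lia.
  have hR := IH (drop j M0) szR (mm_drop j mm0) a2 b2 R' eR.
  rewrite eR in hR.
  have hle : n.*2 - a2 - b2 <= n.*2 - b - b2 by lia.
  have hR' := mono_bound hR hle.
  left; apply: (add_bound hG hR'); rewrite /n; lia.
move=> a b M' eM.
case: (ltngtP a b) => hab.
- exact: fwd ltM mm eM hab.
- suff hc : Claim M by exact: hc _ _ _ eM.
  apply: claim_swap => a' b' M'' eM'.
  apply: (fwd _ _ _ M'') => //; first by rewrite size_map.
  + exact: mm_swap.
  + by move: eM'; rewrite eM /= => -[<- <- _].
-
  have -> : bad_pairs M = bad_pairs M' by rewrite eM /bad_pairs /= hab eqxx.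
  case eM' : M' => [|[a' b'] M'']; first by right.
  rewrite -eM'.
  have mm' : monotone_matching X X M' by rewrite eM in mm; apply: mm_behead mm.
  have := IH M' _ mm' a' b' M'' eM'; rewrite eM /= in ltM.
  move=> /(_ ltM) h; apply: mono_bound h _.
  have mmc : monotone_matching X X ((a, b) :: M') by rewrite -eM.
  have := mm_gt mmc (_ : (a', b') \in M'); rewrite eM' mem_head => /(_ isT) /= [h1 h2].
  lia.
Qed.

End Comb.

Lemma onth_sub (T : eqType) (S : seq T) u v a : u <= a < v ->
  onth (substr S u v) (a - u) = onth S a.
Proof.
move=> /andP [h1 h2].
rewrite /substr !onthE map_take map_drop nth_take; last by lia.
by rewrite nth_drop subnKC.
Qed.

Lemma size_sub (T : eqType) (S : seq T) u v : v <= size S -> size (substr S u v) = v - u.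
Proof. move=> h; rewrite /substr size_take size_drop; case: ifP => //; lia. Qed.

Theorem theorem29 (R : realFieldType) (T : eqType) (eps : R) :
  (0 < eps)%R ->
  (forall S : seq T, sync_string eps S ->
     forall i j : nat, (i < j)%N -> (j <= size S)%N ->
       self_matching eps (substr S i j))
  /\
  (forall S : seq T,
     (forall i j : nat, (i < j)%N -> (j <= size S)%N ->
        self_matching (eps / 2%:R) (substr S i j)) ->
     sync_string eps S).
Proof.
move=> eps_gt0; split.
- move=> S sync i j ij jS.
  set X := substr S i j.
  have sX : size X = j - i by rewrite size_sub.
  have hf : Hf eps X.
    move=> N p q r mm NnE /allP box rX.
    set x := substr S (i + p) (i + q).
    set y := substr S (i + q) (i + r).
    have pq : p < q.
      case: N NnE box {mm} => // e N _ /(_ e (mem_head _ _)) /=; lia.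
    have qr : q < r.
      case: N NnE box {mm} => // e N _ /(_ e (mem_head _ _)) /=; lia.
    have mm' : monotone_matching x y (map (fun e => (e.1 - p, e.2 - q)) N).
      apply: (@mm_map _ X X x y N (subn^~ p) (subn^~ q) mm).
      + move=> u v /mapP [e1 e1N ->] /mapP [e2 e2N ->].
        move: (box e1 e1N) (box e2 e2N) => /= ? ?; lia.
      + move=> u v /mapP [e1 e1N ->] /mapP [e2 e2N ->].
        move: (box e1 e1N) (box e2 e2N) => /= ? ?; lia.
      move=> [e1 e2] eN; move: (box _ eN) => /= hb.
      have [_ _ /= eq] := mm_in mm eN.
      rewrite /x /y !size_sub; try (move: rX jS; rewrite sX; lia).
      split; try lia.
      have -> : e1 - p = (i + e1) - (i + p) by lia.
      have -> : e2 - q = (i + e2) - (i + q) by lia.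
      rewrite !onth_sub; try lia.
      have E1 : onth X e1 = onth S (i + e1).
        rewrite /X -(@onth_sub _ S i j (i + e1)); last by move: rX hb; rewrite sX; lia.
        by congr onth; lia.
      have E2 : onth X e2 = onth S (i + e2).
        rewrite /X -(@onth_sub _ S i j (i + e2)); last by move: rX hb; rewrite sX; lia.
        by congr onth; lia.
      by rewrite -E1 -E2.
    have hle := ed_mm_le mm'.
    have sx : size x = (i + q) - (i + p) by rewrite /x size_sub //; move: rX jS; rewrite sX; lia.
    have sy : size y = (i + r) - (i + q) by rewrite /y size_sub //; move: rX jS; rewrite sX; lia.
    rewrite size_map sx sy in hle.
    have hs := sync (i + p) (i + q) (i + r).
    have : ((1 - eps) * ((i + r) - (i + p))%:R < (ed x y)%:R)%R.
      apply: hs; try lia; move: rX jS; rewrite sX; lia.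
    have -> : (i + r) - (i + p) = r - p by lia.
    have hle' : ((ed x y)%:R + ((size N).*2)%:R <= (r - p)%:R :> R)%R.
      rewrite -natrD ler_nat; move: hle; lia.
    move=> hlt; lra.
  move=> M mm.
  have npos : (0 < (size X)%:R :> R)%R by rewrite ltr0n sX subn_gt0.
  case: M mm => [|[a b] M'] mm.
    by rewrite /bad_pairs /=; apply: mulr_gt0.
  case: (comb_main eps_gt0 hf mm erefl) => [h|h].
    have h2 : (((size X).*2 - a - b)%:R <= ((size X).*2)%:R :> R)%R by rewrite ler_nat; lia.
    have h3 : (eps * ((size X).*2 - a - b)%:R <= eps * ((size X).*2)%:R)%R by rewrite ler_pM2l.
    have h4 := lt_le_trans h h3.
    rewrite -!muln2 !natrM in h4.
    lra.
  have -> : bad_pairs ((a, b) :: M') = 0 by move: h; lia.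
  by apply: mulr_gt0.
- move=> S hsm i j k ij jk kS.
  have [N [mm hN]] := ed_mm_ex (substr S i j) (substr S j k).
  rewrite !size_sub in hN; try lia.
  set X := substr S i k.
  set M := map (fun e => (e.1, e.2 + (j - i))) N.
  have mmM : monotone_matching X X M.
    apply: (@mm_map _ _ _ X X N id (addn^~ (j - i)) mm).
    + by move=> u v.
    + move=> u v _ _ /=; lia.
    move=> [e1 e2] eN; have [h1 h2 h3] := mm_in mm eN; rewrite /= in h1 h2 h3.
    rewrite !size_sub in h1 h2; try lia.
    rewrite /X size_sub //; split => /=; try lia.
    have E1 : onth (substr S i k) e1 = onth S (i + e1).
      rewrite -(@onth_sub _ S i k (i + e1)); [congr onth; lia | lia].
    have E2 : onth (substr S i j) e1 = onth S (i + e1).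
      rewrite -(@onth_sub _ S i j (i + e1)); [congr onth; lia | lia].
    have E3 : onth (substr S i k) (e2 + (j - i)) = onth S (j + e2).
      rewrite -(@onth_sub _ S i k (j + e2)); [congr onth; lia | lia].
    have E4 : onth (substr S j k) e2 = onth S (j + e2).
      rewrite -(@onth_sub _ S j k (j + e2)); [congr onth; lia | lia].
    by rewrite /= E1 E3 -E2 -E4.
  have badM : bad_pairs M = size N.
    rewrite /bad_pairs /M count_map -[RHS]count_predT; apply: eq_in_count => -[e1 e2] eN /=.
    have [h1 _ _] := mm_in mm eN; rewrite /= size_sub in h1; last by lia.
    apply/negP => /eqP; lia.
  have ik : i < k by lia.
  have := hsm i k ik kS M mmM.
  rewrite badM /X size_sub // => hlt.
  have hN' : ((k - i)%:R <= (ed (substr S i j) (substr S j k))%:R + 2 * (size N)%:R :> R)%R.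
    have -> : (2 * (size N)%:R = ((size N).*2)%:R :> R)%R by rewrite -muln2 natrM mulrC.
    rewrite -natrD ler_nat; move: hN; lia.
  lra.
Qed.
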